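(* Let $k,\ell,n\in\mathbb{N}$ (with $k\ge 0$) and let $k'=(2\ell+1)k+\ell$. Then $$H\big(\partial(k,n)\,\big|\,\partial(k',n)\big)\le \mathbb{E}[M(k',n)]\cdot(2\ell+1)^2.$$
   Context: $S$ is simple symmetric random walk on $\mathbb{Z}^2$ started at $0$, $R(n)=\{S(0),\ldots,S(n)\}$. The inner boundary of $A\subset\mathbb{Z}^2$ is $\partial A=\{a\in A: a \text{ is at graph distance } 1 \text{ from some vertex of } \mathbb{Z}^2\setminus A\}$. For $z\in\mathbb{Z}^2$, $k\ge0$: $Q(z,k)=\{z+(j,j'): -k\le j,j'\le k\}$; $\Lambda(k)=\{(2k+1)z: z\in\mathbb{Z}^2\}$. $I(z,k,n)$ is the indicator of $\{\partial R(n)\cap Q(z,k)\ne\emptyset\}$, $M(k,n)=\sum_{z\in\Lambda(k)}I(z,k,n)$, and $\partial(k,n)$ denotes the random vector $(I(z,k,n))_{z\in\Lambda(k)\cap[-2n,2n]^2}$. Entropy: $H(X)=\mathbb{E}[-\log_2 p(X)]$ with $p(x)=\Pr[X=x]$, and conditional entropy $H(X\mid Y)=H(X,Y)-H(Y)$. *)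

(* Defs.v *)
From Stdlib Require Import Reals ZArith List Bool Lia Lra.
Import ListNotations.
Open Scope R_scope.

(* A path of n steps is a list of n directions in {0,1,2,3}; all 4^n paths
   are equally likely. *)
Definition dir (d : nat) : Z * Z :=
  match d with
  | 0%nat => (1%Z, 0%Z)
  | 1%nat => ((-1)%Z, 0%Z)
  | 2%nat => (0%Z, 1%Z)
  | _ => (0%Z, (-1)%Z)
  end.

Definition addZ2 (a b : Z * Z) : Z * Z := (fst a + fst b, snd a + snd b)%Z.

Fixpoint paths (n : nat) : list (list nat) :=
  match n with
  | O => [ [] ]
  | S m => flat_map (fun p => map (fun d => d :: p) [0%nat; 1%nat; 2%nat; 3%nat]) (paths m)
  end.

Fixpoint walk_from (x : Z * Z) (p : list nat) : list (Z * Z) :=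
  x :: match p with
       | [] => []
       | d :: q => walk_from (addZ2 x (dir d)) q
       end.

(* R(n) = {S(0),...,S(n)} (as a list; only membership matters) *)
Definition range (p : list nat) : list (Z * Z) := walk_from (0%Z, 0%Z) p.

Definition eqZ2 (a b : Z * Z) : bool := (Z.eqb (fst a) (fst b) && Z.eqb (snd a) (snd b))%bool.
Definition memZ2 (a : Z * Z) (l : list (Z * Z)) : bool := existsb (eqZ2 a) l.

Definition in_inner_boundary (A : list (Z * Z)) (a : Z * Z) : bool :=
  (memZ2 a A && existsb (fun d => negb (memZ2 (addZ2 a (dir d)) A)) [0%nat; 1%nat; 2%nat; 3%nat])%bool.

Definition inQ (z : Z * Z) (k : nat) (a : Z * Z) : bool :=
  (Z.leb (Z.abs (fst a - fst z)) (Z.of_nat k) && Z.leb (Z.abs (snd a - snd z)) (Z.of_nat k))%bool.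

Definition Ind (z : Z * Z) (k : nat) (p : list nat) : bool :=
  existsb (fun a => (in_inner_boundary (range p) a && inQ z k a)%bool) (range p).

Definition side (k : nat) : Z := (2 * Z.of_nat k + 1)%Z.

Definition Zrange (a b : Z) : list Z :=
  map (fun i => (a + Z.of_nat i)%Z) (seq 0 (Z.to_nat (b - a + 1))).

(* Lambda(k) ∩ [-2n,2n]^2, in a fixed order (as multipliers (i,j), z=(2k+1)(i,j)) *)
Definition lam_grid (k n : nat) : list (Z * Z) :=
  let N := (2 * Z.of_nat n)%Z in
  let I := filter (fun i => Z.leb (Z.abs (side k * i)) N) (Zrange (-N) N) in
  flat_map (fun i => map (fun j => (i, j)) I) I.

Definition lam_pt (k : nat) (ij : Z * Z) : Z * Z := (side k * fst ij, side k * snd ij)%Z.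

Definition bvec (k n : nat) (p : list nat) : list bool :=
  map (fun ij => Ind (lam_pt k ij) k p) (lam_grid k n).

(* Only z = (2k+1)(i,j) with
   |i|,|j| <= n+k+1 can have Q(z,k) meeting [-n,n]^2 ⊇ R(n), so the sum is
   written over that finite window (all other terms are 0). *)
Definition Mcount (k n : nat) (p : list nat) : nat :=
  let W := Zrange (- Z.of_nat (n + k + 1)) (Z.of_nat (n + k + 1)) in
  length (filter (fun ij => Ind (lam_pt k ij) k p) (flat_map (fun i => map (fun j => (i, j)) W) W)).

Definition sumR {A} (f : A -> R) (l : list A) : R := fold_right Rplus 0 (map f l).

Definition expect (n : nat) (X : list nat -> R) : R :=
  sumR (fun w => X w / 4 ^ n) (paths n).

Definition prob {A} (eqA : A -> A -> bool) (n : nat) (X : list nat -> A) (x : A) : R :=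
  INR (length (filter (fun w => eqA (X w) x) (paths n))) / 4 ^ n.

Definition log2 (x : R) : R := ln x / ln 2.

Definition entropy {A} (eqA : A -> A -> bool) (n : nat) (X : list nat -> A) : R :=
  expect n (fun w => - log2 (prob eqA n X (X w))).

Definition eqbl (x y : list bool) : bool :=
  if list_eq_dec Bool.bool_dec x y then true else false.

Definition eqbl2 (x y : list bool * list bool) : bool :=
  (eqbl (fst x) (fst y) && eqbl (snd x) (snd y))%bool.

Definition cond_entropy (n : nat) (X Y : list nat -> list bool) : R :=
  entropy eqbl2 n (fun w => (X w, Y w)) - entropy eqbl n Y.

(* Main.v *)
Require Import Defs.
From Stdlib Require Import Reals ZArith List Lia Lra Bool FinFun.
Import ListNotations.
Open Scope R_scope.

Lemma sumR_cons {A} (f:A->R) a l : sumR f (a::l) = f a + sumR f l.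
Proof. reflexivity. Qed.
Lemma sumR_app {A} (f:A->R) l1 l2 : sumR f (l1++l2) = sumR f l1 + sumR f l2.
Proof. induction l1; simpl; unfold sumR in *; simpl; [lra|]. rewrite IHl1; lra. Qed.
Lemma sumR_map {A B} (f:B->R) (g:A->B) l : sumR f (map g l) = sumR (fun x => f (g x)) l.
Proof. unfold sumR. now rewrite map_map. Qed.
Lemma sumR_ext {A} (f g : A->R) l : (forall x, In x l -> f x = g x) -> sumR f l = sumR g l.
Proof. induction l; intros H; [reflexivity|]. rewrite !sumR_cons, H, IHl; auto with datatypes. Qed.
Lemma sumR_le {A} (f g : A->R) l : (forall x, In x l -> f x <= g x) -> sumR f l <= sumR g l.
Proof. induction l; intros H; [unfold sumR; simpl; lra|]. rewrite !sumR_cons.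
  assert (f a <= g a) by auto with datatypes. assert (sumR f l <= sumR g l) by auto with datatypes. lra. Qed.
Lemma sumR_plus {A} (f g : A->R) l : sumR (fun x => f x + g x) l = sumR f l + sumR g l.
Proof. induction l; [unfold sumR; simpl; lra|]. rewrite !sumR_cons, IHl. lra. Qed.
Lemma sumR_scal {A} (f : A->R) c l : sumR (fun x => c * f x) l = c * sumR f l.
Proof. induction l; [unfold sumR; simpl; lra|]. rewrite !sumR_cons, IHl. lra. Qed.
Lemma sumR_zero {A} (f : A -> R) l : (forall x, In x l -> f x = 0) -> sumR f l = 0.
Proof. intros H. transitivity (sumR (fun _ => 0) l). apply sumR_ext; auto.
  induction l; [reflexivity|]. rewrite sumR_cons, IHl; [lra|]. auto with datatypes. Qed.

Lemma sumR_swap {A B} (G : A->B->R) l1 l2 :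
  sumR (fun a => sumR (G a) l2) l1 = sumR (fun b => sumR (fun a => G a b) l1) l2.
Proof. induction l1.
  - symmetry. apply sumR_zero. intros; reflexivity.
  - rewrite sumR_cons, IHl1, <- sumR_plus. apply sumR_ext. intros; reflexivity. Qed.
Lemma sumR_const1 {A} (l : list A) : sumR (fun _ => 1) l = INR (length l).
Proof. induction l; [reflexivity|]. rewrite sumR_cons, IHl. simpl length. rewrite S_INR. lra. Qed.
Definition ind (b:bool) : R := if b then 1 else 0.
Lemma length_filter_sumR {A} (f:A->bool) l : INR (length (filter f l)) = sumR (fun x => ind (f x)) l.
Proof. induction l; [reflexivity|]. rewrite sumR_cons. simpl. destruct (f a); simpl length;
  [rewrite S_INR|]; rewrite IHl; unfold ind; lra. Qed.

Lemma eqbl_spec x y : eqbl x y = true <-> x = y.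
Proof. unfold eqbl. destruct (list_eq_dec bool_dec x y); split; congruence. Qed.
Lemma eqbl_refl x : eqbl x x = true.
Proof. now apply eqbl_spec. Qed.
Lemma eqbl_sym x y : eqbl x y = eqbl y x.
Proof. unfold eqbl. destruct (list_eq_dec bool_dec x y), (list_eq_dec bool_dec y x); congruence. Qed.
Lemma eqbl2_refl x : eqbl2 x x = true.
Proof. unfold eqbl2. now rewrite !eqbl_refl. Qed.

Lemma sumR_onehot (U : list (list bool)) (x : list bool) (G : list bool -> R) :
  NoDup U -> In x U -> sumR (fun v => ind (eqbl x v) * G v) U = G x.
Proof. induction U as [|u U IH]; intros Hnd Hin; [destruct Hin|].
  inversion Hnd; subst. rewrite sumR_cons. destruct (list_eq_dec bool_dec x u).
  - subst. rewrite eqbl_refl, sumR_zero; [unfold ind; lra|].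
    intros v Hv. destruct (eqbl u v) eqn:E; [apply eqbl_spec in E; subst; contradiction|]. unfold ind; lra.
  - destruct Hin as [->|Hin]; [congruence|]. rewrite IH; auto.
    destruct (eqbl x u) eqn:E; [apply eqbl_spec in E; contradiction|]. unfold ind; lra. Qed.

Fixpoint allb (m:nat) : list (list bool) :=
  match m with 0%nat => [[]] | S m => map (cons false) (allb m) ++ map (cons true) (allb m) end.
Fixpoint qf (v fs : list bool) : R :=
  match v with
  | [] => 1
  | b :: v' => match fs with
               | [] => /2 * qf v' []
               | f :: fs' => (if f then /2 else if b then 0 else 1) * qf v' fs'
               end
  end.
Lemma qf_sum m fs : sumR (fun v => qf v fs) (allb m) = 1.
Proof. revert fs; induction m; intros fs; [unfold sumR; simpl; lra|].
  simpl allb. rewrite sumR_app, !sumR_map. destruct fs as [|f fs]; simpl.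
  - rewrite !sumR_scal, IHm. lra.
  - rewrite !sumR_scal, IHm. destruct f; lra. Qed.
Lemma qf_nonneg v fs : 0 <= qf v fs.
Proof. revert fs; induction v; intros fs; simpl; [lra|]. destruct fs as [|f fs].
  - specialize (IHv []); lra.
  - specialize (IHv fs). destruct f; [|destruct a]; nra. Qed.
Lemma allb_In v : In v (allb (length v)).
Proof. induction v; simpl; auto. apply in_or_app. destruct a; [right|left]; apply in_map; auto. Qed.
Lemma allb_NoDup m : NoDup (allb m).
Proof. induction m; simpl. constructor; [simpl; tauto| constructor].
  apply NoDup_app; try (apply FinFun.Injective_map_NoDup; [intros x y H; now inversion H|auto]).
  intros a H1 H2. apply in_map_iff in H1, H2. destruct H1 as [x [<- _]], H2 as [y [E _]]. discriminate. Qed.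
Definition cnt {A} (eqA : A->A->bool) (Om : list (list nat)) (Z : list nat -> A) (w : list nat) : nat :=
  length (filter (fun w' => eqA (Z w') (Z w)) Om).

Lemma inner_le (Om : list (list nat)) (X Y : list nat -> list bool) (a : list bool -> list bool) y m :
  (forall w, In w Om -> length (X w) = m) ->
  sumR (fun w => ind (eqbl y (Y w)) * (qf (X w) (a (Y w)) / INR (cnt eqbl2 Om (fun w => (X w, Y w)) w))) Om <= 1.
Proof.
  intros Hlen.
  set (D := fun v => INR (length (filter (fun w'' => eqbl2 (X w'', Y w'') (v, y)) Om))).
  rewrite (sumR_ext _ (fun w => ind (eqbl y (Y w)) * (qf (X w) (a y) / D (X w)))).
  2:{ intros w _. destruct (eqbl y (Y w)) eqn:E; [|unfold ind; lra].
      apply eqbl_spec in E. unfold cnt, D. rewrite <- E. reflexivity. }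
  rewrite (sumR_ext _ (fun w => sumR (fun v => ind (eqbl (X w) v) * (ind (eqbl y (Y w)) * (qf v (a y) / D v))) (allb m))).
  2:{ intros w Hw. rewrite sumR_onehot; auto. apply allb_NoDup. rewrite <- (Hlen w Hw). apply allb_In. }
  rewrite sumR_swap. rewrite <- (qf_sum m (a y)). apply sumR_le. intros v _.
  rewrite (sumR_ext _ (fun w => (qf v (a y) / D v) * (ind (eqbl (X w) v) * ind (eqbl y (Y w))))).
  2:{ intros; lra. }
  rewrite sumR_scal.
  replace (sumR (fun w => ind (eqbl (X w) v) * ind (eqbl y (Y w))) Om) with (D v).
  2:{ unfold D. rewrite length_filter_sumR. apply sumR_ext. intros w _. unfold eqbl2; simpl.
      rewrite (eqbl_sym (Y w) y). destruct (eqbl (X w) v), (eqbl y (Y w)); unfold ind; simpl; lra. }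
  assert (0 <= qf v (a y)) by apply qf_nonneg.
  destruct (Req_dec (D v) 0) as [E|E].
  - rewrite E. lra.
  - right. field. auto.
Qed.
Lemma cnt_pos {A} (eqA : A->A->bool) Om Z w : In w Om -> eqA (Z w) (Z w) = true -> 0 < INR (cnt eqA Om Z w).
Proof. intros Hw He. apply lt_0_INR. unfold cnt.
  destruct (filter (fun w' => eqA (Z w') (Z w)) Om) eqn:E; simpl; [|lia].
  assert (In w (filter (fun w' => eqA (Z w') (Z w)) Om)) by (apply filter_In; auto). rewrite E in H; destruct H. Qed.

Lemma ln_le' x y : 0 < x -> x <= y -> ln x <= ln y.
Proof. intros Hx [H|H]; [left; apply ln_increasing; auto| subst; lra]. Qed.

Lemma ln_le_sub1 x : 0 < x -> ln x <= x - 1.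
Proof. intros Hx. pose proof (exp_ineq1_le (ln x)). rewrite exp_ln in H; auto. lra. Qed.

Lemma gibbs (Om : list (list nat)) (X Y : list nat -> list bool) (a : list bool -> list bool) m (C : list nat -> nat) :
  (forall w, In w Om -> length (X w) = m) ->
  (forall w, In w Om -> (/2)^(C w) <= qf (X w) (a (Y w))) ->
  sumR (fun w => log2 (INR (cnt eqbl Om Y w)) - log2 (INR (cnt eqbl2 Om (fun w => (X w, Y w)) w))) Om
  <= sumR (fun w => INR (C w)) Om.
Proof.
  intros Hlen Hq.
  set (cY := fun w => INR (cnt eqbl Om Y w)).
  set (cXY := fun w => INR (cnt eqbl2 Om (fun w => (X w, Y w)) w)).
  set (q := fun w => qf (X w) (a (Y w))).
  assert (Hln2 : 0 < ln 2) by (pose proof ln_lt_2; lra).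
  assert (Hstep : forall w, In w Om ->
     log2 (cY w) - log2 (cXY w) - INR (C w) <= (cY w * q w / cXY w - 1) / ln 2).
  { intros w Hw.
    assert (h1 : 0 < cY w) by (apply cnt_pos; auto; apply eqbl_refl).
    assert (h2 : 0 < cXY w) by (apply cnt_pos; auto; apply eqbl2_refl).
    assert (h3 : 0 < (/2)^(C w)) by (apply pow_lt; lra).
    assert (h4 : 0 < q w) by (pose proof (Hq w Hw); unfold q; lra).
    assert (h5 : ln ((/2)^(C w)) <= ln (q w)) by (apply ln_le'; auto; apply Hq; auto).
    rewrite ln_pow in h5 by lra. rewrite ln_Rinv in h5 by lra.
    assert (h6 : ln (cY w * q w / cXY w) = ln (cY w) + ln (q w) - ln (cXY w)).
    { unfold Rdiv. rewrite !ln_mult, ln_Rinv; try lra; try apply Rinv_0_lt_compat; try nra. }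
    pose proof (ln_le_sub1 (cY w * q w / cXY w)) as h7.
    assert (0 < cY w * q w / cXY w) by (apply Rdiv_lt_0_compat; nra).
    specialize (h7 H). rewrite h6 in h7. unfold log2.
    apply (Rmult_le_reg_r (ln 2)); auto. unfold Rdiv. rewrite !Rmult_minus_distr_r, !Rmult_assoc, Rinv_l by lra.
    nra. }
  assert (Hsum : sumR (fun w => cY w * q w / cXY w) Om <= INR (length Om)).
  { rewrite (sumR_ext _ (fun w => sumR (fun w' => ind (eqbl (Y w') (Y w)) * (q w / cXY w)) Om)).
    2:{ intros w _. rewrite (sumR_ext _ (fun w' => (q w / cXY w) * ind (eqbl (Y w') (Y w)))) by (intros; lra).
        rewrite sumR_scal. unfold cY, cnt. rewrite length_filter_sumR. unfold Rdiv. lra. }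
    rewrite sumR_swap, <- sumR_const1. apply sumR_le. intros w' _. apply (inner_le Om X Y a (Y w') m Hlen). }
  apply Rle_trans with (sumR (fun w => INR (C w) + (cY w * q w / cXY w - 1) / ln 2) Om).
  - apply sumR_le. intros w Hw. specialize (Hstep w Hw). fold (cY w) (cXY w). set (t := (cY w * q w / cXY w - 1) / ln 2) in *. set (u1 := log2 (cY w)) in *. set (u2 := log2 (cXY w)) in *. lra.
  - rewrite sumR_plus. 
    assert (sumR (fun w => (cY w * q w / cXY w - 1) / ln 2) Om <= 0).
    { rewrite (sumR_ext _ (fun w => / ln 2 * (cY w * q w / cXY w + (-1)))) by (intros; unfold Rdiv; lra).
      rewrite sumR_scal, sumR_plus.
      rewrite (sumR_ext (fun _ : list nat => -1) (fun _ => -1 * 1)) by (intros; lra). rewrite sumR_scal, sumR_const1.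
      assert (0 < / ln 2) by (apply Rinv_0_lt_compat; auto). nra. }
    lra.
Qed.
Lemma entropy_eq {A} (eqA : A -> A -> bool) n Z :
  (forall x, eqA x x = true) ->
  entropy eqA n Z = sumR (fun w => (log2 (4^n) - log2 (INR (cnt eqA (paths n) Z w))) / 4^n) (paths n).
Proof. intros Hr. unfold entropy, expect. apply sumR_ext. intros w Hw.
  assert (h1 : 0 < INR (cnt eqA (paths n) Z w)) by (apply cnt_pos; auto).
  assert (h2 : 0 < 4^n) by (apply pow_lt; lra).
  unfold prob, log2. fold (cnt eqA (paths n) Z w). replace (ln (INR (cnt eqA (paths n) Z w) / 4 ^ n)) with (ln (INR (cnt eqA (paths n) Z w)) - ln (4^n)). 2:{ unfold Rdiv. rewrite ln_mult, ln_Rinv; try lra; try (apply Rinv_0_lt_compat; lra). } 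
  field. 
  pose proof ln_lt_2; lra. Qed.

Lemma cond_entropy_eq n X Y : cond_entropy n X Y =
  sumR (fun w => log2 (INR (cnt eqbl (paths n) Y w)) - log2 (INR (cnt eqbl2 (paths n) (fun w => (X w, Y w)) w))) (paths n) / 4^n.
Proof. unfold cond_entropy. rewrite !entropy_eq; try apply eqbl_refl; try apply eqbl2_refl.
  set (N := 4^n). assert (0 < N) by (apply pow_lt; lra).
  set (F := fun w => log2 (INR (cnt eqbl (paths n) Y w))).
  set (G := fun w => log2 (INR (cnt eqbl2 (paths n) (fun w => (X w, Y w)) w))).
  change (sumR (fun w => (log2 N - G w) / N) (paths n) - sumR (fun w => (log2 N - F w) / N) (paths n) =
     sumR (fun w => F w - G w) (paths n) / N).
  rewrite (sumR_ext (fun w => (log2 N - G w) / N) (fun w => (/N) * (log2 N - G w))) by (intros; unfold Rdiv; ring).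
  rewrite (sumR_ext (fun w => (log2 N - F w) / N) (fun w => (/N) * (log2 N - F w))) by (intros; unfold Rdiv; ring).
  rewrite !sumR_scal. unfold Rdiv. rewrite Rmult_comm. 
  rewrite (sumR_ext (fun w => F w - G w) (fun w => (log2 N - G w) + (-1) * (log2 N - F w))) by (intros; ring).
  rewrite sumR_plus, sumR_scal. ring. Qed.
Lemma in_Zrange a b x : In x (Zrange a b) <-> (a <= x <= b)%Z.
Proof. unfold Zrange. rewrite in_map_iff. split.
 - intros [i [<- Hi]]. apply in_seq in Hi. lia.
 - intros H. exists (Z.to_nat (x - a)). split; [lia|]. apply in_seq. lia.
Qed.
Lemma Zrange_length a b : length (Zrange a b) = Z.to_nat (b-a+1).
Proof. unfold Zrange. now rewrite length_map, length_seq. Qed.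
Lemma Zrange_NoDup a b : NoDup (Zrange a b).
Proof. unfold Zrange. apply Injective_map_NoDup; [intros x y H; lia| apply seq_NoDup]. Qed.

Definition Igrid (k n : nat) : list Z :=
  filter (fun i => Z.leb (Z.abs (side k * i)) (2 * Z.of_nat n)) (Zrange (- (2*Z.of_nat n)) (2 * Z.of_nat n)).
Lemma lam_grid_prod k n : lam_grid k n = list_prod (Igrid k n) (Igrid k n).
Proof. unfold lam_grid, Igrid. rewrite list_prod_as_flat_map. reflexivity. Qed.
Lemma in_Igrid k n i : In i (Igrid k n) <-> (Z.abs (side k * i) <= 2 * Z.of_nat n)%Z.
Proof. unfold Igrid. rewrite filter_In, in_Zrange, Z.leb_le.
  assert (Z.abs (side k * i) = side k * Z.abs i)%Z by (rewrite Z.abs_mul; unfold side; f_equal; lia).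
  unfold side in *. split; [tauto|]. intros; split; auto. nia. Qed.
Lemma Igrid_NoDup k n : NoDup (Igrid k n).
Proof. apply NoDup_filter, Zrange_NoDup. Qed.

Definition phi1 (l:nat) (i:Z) : Z := ((i + Z.of_nat l) / (2 * Z.of_nat l + 1))%Z.
Lemma phi1_spec l i : (- Z.of_nat l <= i - (2*Z.of_nat l+1) * phi1 l i <= Z.of_nat l)%Z.
Proof. unfold phi1. pose proof (Z.div_mod (i + Z.of_nat l) (2*Z.of_nat l+1)).
  pose proof (Z.mod_pos_bound (i + Z.of_nat l) (2*Z.of_nat l+1)). lia. Qed.
Definition phi l (ij : Z*Z) : Z*Z := (phi1 l (fst ij), phi1 l (snd ij)).

Lemma eqZ2_spec a b : eqZ2 a b = true <-> a = b.
Proof. destruct a, b; unfold eqZ2; simpl. rewrite andb_true_iff, !Z.eqb_eq. split; [intros [-> ->]; auto| intros H; inversion H; auto]. Qed.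

Lemma walk_bound x p a : In a (walk_from x p) ->
  (Z.abs (fst a - fst x) <= Z.of_nat (length p) /\ Z.abs (snd a - snd x) <= Z.of_nat (length p))%Z.
Proof. revert x; induction p as [|d p IH]; intros x H; simpl in H.
  - destruct H as [<-|[]]. simpl. lia.
  - destruct H as [<-|H]; [simpl; lia|]. apply IH in H. simpl length.
    destruct d as [|[|[|]]]; simpl in H; lia. Qed.

Lemma paths_length n w : In w (paths n) -> length w = n.
Proof. revert w; induction n; intros w H; simpl in H. destruct H as [<-|[]]; auto.
  apply in_flat_map in H. destruct H as [p [Hp H]]. simpl in H.
  destruct H as [<-|[<-|[<-|[<-|[]]]]]; simpl; f_equal; auto. Qed.

Lemma range_bound n w a : In w (paths n) -> In a (range w) ->
  (Z.abs (fst a) <= Z.of_nat n /\ Z.abs (snd a) <= Z.of_nat n)%Z.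
Proof. intros Hw Ha. apply walk_bound in Ha. rewrite (paths_length n w Hw) in Ha. simpl in Ha.
  rewrite !Z.sub_0_r in Ha. auto. Qed.

Lemma Ind_spec z k p : Ind z k p = true <->
  exists a, In a (range p) /\ in_inner_boundary (range p) a = true /\ inQ z k a = true.
Proof. unfold Ind. rewrite existsb_exists. split.
  - intros [a [H1 H2]]. apply andb_true_iff in H2. exists a; tauto.
  - intros [a [H1 [H2 H3]]]. exists a. rewrite H2, H3. auto. Qed.

Lemma inQ_spec z k a : inQ z k a = true <->
  (Z.abs (fst a - fst z) <= Z.of_nat k /\ Z.abs (snd a - snd z) <= Z.of_nat k)%Z.
Proof. unfold inQ. now rewrite andb_true_iff, !Z.leb_le. Qed.

Lemma coord_arith (a i q K Lh : Z) : (0 <= K -> 0 <= Lh -> -Lh <= i - (2*Lh+1)*q <= Lh ->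
  Z.abs (a - (2*K+1)*i) <= K -> Z.abs (a - (2*((2*Lh+1)*K+Lh)+1)*q) <= (2*Lh+1)*K+Lh)%Z.
Proof. intros HK HL Hr Ha. set (r := (i - (2*Lh+1)*q)%Z) in *.
  assert (E : (a - (2*((2*Lh+1)*K+Lh)+1)*q = (a - (2*K+1)*i) + (2*K+1)*r)%Z) by (unfold r; ring).
  rewrite E. assert (Z.abs ((2*K+1)*r) <= (2*K+1)*Lh)%Z by (rewrite Z.abs_mul; rewrite (Z.abs_eq (2*K+1)) by lia; nia).
  pose proof (Z.abs_triangle (a - (2*K+1)*i) ((2*K+1)*r)). nia. Qed.

Lemma window_arith (a g n K : Z) : (0 <= K -> 0 <= n -> Z.abs a <= n -> Z.abs (a - (2*K+1)*g) <= K ->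
  Z.abs ((2*K+1)*g) <= 2*n /\ Z.abs g <= n + K)%Z.
Proof. intros HK Hn Ha Hg. assert (H1 : (Z.abs ((2*K+1)*g) <= n + K)%Z) by lia.
  rewrite Z.abs_mul, (Z.abs_eq (2*K+1)) in H1 by lia. rewrite Z.abs_mul, (Z.abs_eq (2*K+1)) by lia.
  destruct (Z.eq_dec g 0) as [->|Hz]; [rewrite Z.abs_0, Z.mul_0_r; lia|]. assert (1 <= Z.abs g)%Z by lia. nia. Qed.
Lemma Ind_coarse k l p ij : Ind (lam_pt k ij) k p = true ->
  Ind (lam_pt ((2*l+1)*k+l) (phi l ij)) ((2*l+1)*k+l) p = true.
Proof. rewrite !Ind_spec. intros [a [H1 [H2 H3]]]. exists a. split; auto; split; auto.
  rewrite inQ_spec in *. destruct ij as [i j]; destruct a as [a1 a2]. unfold lam_pt, phi, side in *; cbn [fst snd] in *.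
  pose proof (phi1_spec l i). pose proof (phi1_spec l j).
  replace (Z.of_nat ((2*l+1)*k+l)) with ((2*Z.of_nat l+1)*Z.of_nat k + Z.of_nat l)%Z by lia.
  destruct H3. split; [apply coord_arith with (i := i)|apply coord_arith with (i := j)]; lia.
Qed.

Lemma Ind_window k n p g : In p (paths n) -> Ind (lam_pt k g) k p = true ->
  (Z.abs (side k * fst g) <= 2 * Z.of_nat n /\ Z.abs (fst g) <= Z.of_nat n + Z.of_nat k /\
   Z.abs (side k * snd g) <= 2 * Z.of_nat n /\ Z.abs (snd g) <= Z.of_nat n + Z.of_nat k)%Z.
Proof. intros Hp H. apply Ind_spec in H. destruct H as [a [H1 [_ H3]]].
  apply inQ_spec in H3. pose proof (range_bound n p a Hp H1). destruct g as [g1 g2]; destruct a as [a1 a2].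
  unfold lam_pt, side in *; cbn [fst snd] in *.
  destruct H3, H.
  destruct (window_arith a1 g1 (Z.of_nat n) (Z.of_nat k)); try lia.
  destruct (window_arith a2 g2 (Z.of_nat n) (Z.of_nat k)); try lia. Qed.

Lemma Ind_in_grid k n p g : In p (paths n) -> Ind (lam_pt k g) k p = true -> In g (lam_grid k n).
Proof. intros Hp H. destruct (Ind_window k n p g Hp H) as [h1 [_ [h2 _]]].
  rewrite lam_grid_prod. destruct g as [g1 g2]. apply in_prod_iff. rewrite !in_Igrid. auto. Qed.

Lemma filter_split {A} (P Q : A -> bool) L :
  (length (filter P L) <= length (filter Q L) + length (filter (fun x => P x && negb (Q x)) L))%nat.
Proof. induction L; simpl; [lia|]. destruct (P a), (Q a); simpl; lia. Qed.

Lemma count_fibers {A B} (phi : A -> B) (eqB : B->B->bool) (Hspec : forall x y, eqB x y = true <-> x = y) K V :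
  forall (P : A -> bool) L,
  (forall x, In x L -> P x = true -> In (phi x) V) ->
  (forall g, In g V -> (length (filter (fun x => eqB (phi x) g) L) <= K)%nat) ->
  (length (filter P L) <= K * length V)%nat.
Proof. induction V as [|g V IH]; intros P L H1 H2.
  - destruct (filter P L) eqn:E; simpl; [lia|].
    assert (In a (filter P L)) by (rewrite E; left; auto). apply filter_In in H. destruct H.
    destruct (H1 a H H0).
  - eapply Nat.le_trans; [apply (filter_split P (fun x => eqB (phi x) g))|].
    simpl length. rewrite Nat.mul_succ_r.
    assert (length (filter (fun x => eqB (phi x) g) L) <= K)%nat by (apply H2; left; auto).
    assert (length (filter (fun x => P x && negb (eqB (phi x) g)) L) <= K * length V)%nat.
    { apply IH.
      - intros x Hx Hp. apply andb_true_iff in Hp. destruct Hp as [Hp Hn].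
        destruct (H1 x Hx Hp) as [E|E]; auto. rewrite E in Hn.
        assert (eqB (phi x) (phi x) = true) by (apply Hspec; auto). rewrite H0 in Hn. discriminate.
      - intros g' Hg'. apply H2. right; auto. }
    lia.
Qed.

Lemma fiber_row {A B} (f : A -> bool) (h : B -> bool) x J :
  length (filter (fun p => f (fst p) && h (snd p)) (map (fun y => (x, y)) J)) = if f x then length (filter h J) else 0%nat.
Proof. induction J as [|b J IH]; simpl; [destruct (f x); auto|].
  destruct (f x), (h b); simpl; rewrite IH; auto. Qed.

Lemma fiber_prod {A B} (f : A -> bool) (h : B -> bool) I J :
  length (filter (fun p => f (fst p) && h (snd p)) (list_prod I J)) = (length (filter f I) * length (filter h J))%nat.
Proof. induction I as [|x I IH]; simpl; auto. rewrite filter_app, length_app, IH.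
  rewrite fiber_row. destruct (f x); simpl; auto. Qed.

Lemma fiber1 l I g : NoDup I -> (length (filter (fun i => Z.eqb (phi1 l i) g) I) <= 2*l+1)%nat.
Proof. intros Hnd.
  replace (2*l+1)%nat with (length (Zrange ((2*Z.of_nat l+1)*g - Z.of_nat l) ((2*Z.of_nat l+1)*g + Z.of_nat l))).
  2:{ rewrite Zrange_length. lia. }
  apply NoDup_incl_length. apply NoDup_filter; auto.
  intros i Hi. apply filter_In in Hi. destruct Hi as [_ Hi]. apply Z.eqb_eq in Hi.
  pose proof (phi1_spec l i). rewrite Hi in H. apply in_Zrange. lia. Qed.

Lemma fiber_grid k n l g : (length (filter (fun x => eqZ2 (phi l x) g) (lam_grid k n)) <= (2*l+1)^2)%nat.
Proof. rewrite lam_grid_prod.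
  rewrite (filter_ext _ (fun p => Z.eqb (phi1 l (fst p)) (fst g) && Z.eqb (phi1 l (snd p)) (snd g))) by reflexivity.
  rewrite (fiber_prod (fun i => Z.eqb (phi1 l i) (fst g)) (fun j => Z.eqb (phi1 l j) (snd g))). simpl Nat.pow. rewrite Nat.mul_1_r.
  apply Nat.mul_le_mono; apply fiber1; apply Igrid_NoDup. Qed.

Lemma qf_map {A} (f g : A -> bool) L : (forall x, In x L -> f x = true -> g x = true) ->
  qf (map f L) (map g L) = (/2)^(length (filter g L)).
Proof. induction L as [|x L IH]; intros H; simpl; auto.
  rewrite IH by auto with datatypes. destruct (g x) eqn:E; simpl; [reflexivity|].
  destruct (f x) eqn:F; [rewrite (H x) in E; auto with datatypes; discriminate|]. lra. Qed.

Lemma combine_map {A B} (f : A -> B) l : combine l (map f l) = map (fun x => (x, f x)) l.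
Proof. induction l; simpl; f_equal; auto. Qed.
Lemma existsb_map' {A B} (f : B -> bool) (g : A -> B) l : existsb f (map g l) = existsb (fun x => f (g x)) l.
Proof. induction l; simpl; auto. now rewrite IHl. Qed.

Theorem mainTheorem14 (k l n : nat) :
  let k' := ((2 * l + 1) * k + l)%nat in
  cond_entropy n (bvec k n) (bvec k' n)
    <= expect n (fun w => INR (Mcount k' n w)) * INR ((2 * l + 1) ^ 2).
Proof.
  intros k'. rewrite cond_entropy_eq.
  set (grid' := lam_grid k' n).
  set (a := fun y : list bool => map (fun ij => existsb (fun pr => eqZ2 (fst pr) (phi l ij) && snd pr) (combine grid' y)) (lam_grid k n)).
  set (gw := fun w ij => existsb (fun g => eqZ2 g (phi l ij) && Ind (lam_pt k' g) k' w) grid').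
  set (C := fun w => length (filter (gw w) (lam_grid k n))).
  assert (HaY : forall w, a (bvec k' n w) = map (gw w) (lam_grid k n)).
  { intro w. unfold a, bvec. fold grid'. rewrite combine_map. apply map_ext. intros ij. unfold gw.
    rewrite existsb_map'. reflexivity. }
  assert (Hgw : forall w, In w (paths n) -> forall ij, Ind (lam_pt k ij) k w = true -> gw w ij = true).
  { intros w Hw ij H. unfold gw. apply existsb_exists. exists (phi l ij).
    assert (H' : Ind (lam_pt k' (phi l ij)) k' w = true) by (apply Ind_coarse; auto).
    split. apply Ind_in_grid with w; auto. rewrite H', (proj2 (eqZ2_spec _ _) eq_refl). reflexivity. }
  assert (HS : sumR (fun w => log2 (INR (cnt eqbl (paths n) (bvec k' n) w)) -
                  log2 (INR (cnt eqbl2 (paths n) (fun w => (bvec k n w, bvec k' n w)) w))) (paths n)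
               <= sumR (fun w => INR (C w)) (paths n)).
  { apply gibbs with (a := a) (m := length (lam_grid k n)).
    - intros; unfold bvec; rewrite length_map; auto.
    - intros w Hw. rewrite HaY. unfold bvec at 1. rewrite qf_map. right; reflexivity.
      intros x _ Hx; apply Hgw; auto. }
  assert (HC : forall w, In w (paths n) -> (C w <= (2*l+1)^2 * Mcount k' n w)%nat).
  { intros w Hw. unfold C, Mcount.
    apply (count_fibers (phi l) eqZ2 eqZ2_spec).
    - intros ij Hij Hg. apply filter_In. unfold gw in Hg. apply existsb_exists in Hg.
      destruct Hg as [g [Hg1 Hg2]]. apply andb_true_iff in Hg2. destruct Hg2 as [E HI].
      apply eqZ2_spec in E. subst g. split; auto.
      destruct (Ind_window k' n w (phi l ij) Hw HI) as [_ [h1 [_ h2]]].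
      destruct (phi l ij) as [g1 g2]. cbn [fst snd] in *.
      apply in_flat_map. exists g1. split; [apply in_Zrange; lia|].
      apply in_map_iff. exists g2. split; [reflexivity|apply in_Zrange; lia].
    - intros g _. apply fiber_grid. }
  unfold expect.
  assert (h4 : 0 < 4 ^ n) by (apply pow_lt; lra).
  rewrite (sumR_ext (fun w => INR (Mcount k' n w) / 4 ^ n) (fun w => / 4^n * INR (Mcount k' n w)))
    by (intros; unfold Rdiv; ring).
  rewrite sumR_scal.
  assert (sumR (fun w => INR (C w)) (paths n) <= INR ((2*l+1)^2) * sumR (fun w => INR (Mcount k' n w)) (paths n)).
  { rewrite <- sumR_scal. apply sumR_le. intros w Hw. rewrite <- mult_INR. apply le_INR. auto. }
  unfold Rdiv. 
  assert (0 < / 4^n) by (apply Rinv_0_lt_compat; auto).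
  set (S := sumR _ (paths n)) in HS |- *.
  set (M := sumR (fun w => INR (Mcount k' n w)) (paths n)) in *.
  set (SC := sumR (fun w => INR (C w)) (paths n)) in *.
  set (KK := INR ((2*l+1)^2)) in *.
  nra.
Qed.
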